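(* Consider the early contracting game with fully informative grading in which every school has student abilities uniformly distributed on $[0,1]$. At any equilibrium, the set of jobs that contract early is an interval of job qualities $[b,c]$, and the set of abilities that these jobs receive under the truthful mapping $Q_T$ is an interval $[a,1-a]$ symmetric around $1/2$.
   Context: Students form a continuum of unit mass; every school (a continuum of infinitesimal schools) has student abilities uniformly distributed on $[0,1]$, so every school has average ability $1/2$. Jobs form a continuum of unit mass with qualities in $[0,1]$, continuous CDF $\mu$ with positive density. $Q_T$ is the nondecreasing assortative map: students with ability at most $a$ get exactly the jobs of quality at most $Q_T(a)$. Grading is fully informative (each student's label is their true ability). Agents are risk neutral. Early contracting game: in stage 1 a job may contract with a uniformly random student of a school (expected ability $1/2$); in stage 2 remaining students are matched to remaining jobs assortatively by true ability, via an increasing map $\hat Q$. Equilibrium: (1) a stage-1 contract between a school of average $\hat a$ and job $q$ requires $\hat Q^{-1}(q)\le\hat a$ and that the school's remaining students' average stage-2 quality be at most $q$; (2) there is no school of average $\hat a$ with stage-2 students and job $q$ with $\hat Q^{-1}(q)<\hat a$ such that the school's average stage-2 quality is below $q$; (3) among stage-1 jobs, better jobs go to schools of no lower average ability. *)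

(* Defs.v *)
From Stdlib Require Import Reals.
Open Scope R_scope.

Definition is_job_cdf (mu : R -> R) : Prop :=
  (forall q, q <= 0 -> mu q = 0) /\
  (forall q, 1 <= q -> mu q = 1) /\
  continuity mu /\
  exists dens : R -> R,
    forall q, 0 < q < 1 -> derivable_pt_lim mu q (dens q) /\ 0 < dens q.

(* Truthful assortative map Q_T: students with ability <= a (mass a) get
   exactly the jobs of quality <= Q_T a (mass mu (Q_T a)). *)
Definition truthful_map (mu QT : R -> R) : Prop :=
  forall a, 0 <= a <= 1 -> 0 <= QT a <= 1 /\ mu (QT a) = a.

(* G q = mass of the jobs of quality <= q that contract early (stage 1).
   Early jobs are a sub-population of all jobs. *)
Definition early_mass_profile (mu G : R -> R) : Prop :=
  G 0 = 0 /\ forall x y, x <= y -> 0 <= G y - G x <= mu y - mu x.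

Definition early_mass (G : R -> R) : R := G 1.

(* Each school has abilities uniform on [0,1], average ability 1/2. *)
Definition school_avg : R := 1 / 2.

(* Stage 2: remaining students (mass 1 - m, abilities still uniform on [0,1]
   since early students are drawn uniformly at random) matched assortatively
   by true ability to the remaining jobs via an increasing map Qhat:
   students with ability <= a get exactly the remaining jobs of quality
   <= Qhat a. *)
Definition stage2_map (mu G Qhat : R -> R) : Prop :=
  (forall a, 0 <= a <= 1 ->
     0 <= Qhat a <= 1 /\ mu (Qhat a) - G (Qhat a) = (1 - early_mass G) * a) /\
  (forall a a', 0 <= a -> a < a' -> a' <= 1 -> Qhat a < Qhat a').

(* Qhat^{-1}(q): the stage-2 ability rank of quality q, i.e. the fraction of
   remaining (stage-2) jobs of quality <= q. For stage-2 jobs this is the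
   ability of the student matched to q; in general it is the generalized
   inverse of Qhat. *)
Definition Qhat_inv (mu G : R -> R) (q : R) : R :=
  (mu q - G q) / (1 - early_mass G).

(* Job quality q contracts early: q is in the support of the early-job
   distribution. *)
Definition contracts_early (G : R -> R) (q : R) : Prop :=
  forall eps, 0 < eps -> G (q - eps) < G (q + eps).

(* Equilibrium of the early contracting game; v is the average stage-2
   quality of a school's remaining students (= integral of Qhat over [0,1]).
   All schools have the same average 1/2, so condition (3) is vacuous. *)
Definition is_equilibrium (mu G Qhat : R -> R) (v : R) : Prop :=
  stage2_map mu G Qhat /\
  (forall q, contracts_early G q ->
     Qhat_inv mu G q <= school_avg /\ v <= q) /\
  (* (2): some school has stage-2 students iff early_mass G < 1 *)
  (early_mass G < 1 ->
     forall q, 0 <= q <= 1 -> ~ (Qhat_inv mu G q < school_avg /\ v < q)).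

(* Main.v *)
Require Import Defs.
From Stdlib Require Import Reals Lra Classical.
Open Scope R_scope.

Lemma support_lemma (G : R -> R) (Hmon : forall x y, x <= y -> G x <= G y)
  x y : x <= y -> G x < G y -> exists q, x <= q <= y /\ contracts_early G q.
Proof.
  intros Hxy HG.
  set (E := fun t => x <= t <= y /\ G t <= G x).
  assert (Hb : bound E) by (exists y; intros t [Ht _]; lra).
  assert (Hx : exists t, E t) by (exists x; unfold E; split; lra).
  destruct (completeness E Hb Hx) as [q [Hub Hlub]].
  assert (xq : x <= q) by (apply Hub; unfold E; split; lra).
  assert (qy : q <= y) by (apply Hlub; intros t [Ht _]; lra).
  exists q; split; [lra|].
  intros eps Heps.
  assert (H1 : G (q - eps) <= G x).
  { destruct (classic (exists t, E t /\ q - eps < t)) as [[t [[Ht1 Ht2] Ht3]]|Hn].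
    - apply Rle_trans with (G t); [apply Hmon; lra | exact Ht2].
    - exfalso. assert (q <= q - eps); [|lra].
      apply Hlub. intros t Et. destruct (Rle_dec t (q - eps)) as [h|h]; [exact h|].
      exfalso; apply Hn; exists t; split; [exact Et|lra]. }
  assert (H2 : G x < G (q + eps)).
  { destruct (Rle_dec (q + eps) y) as [h|h].
    - destruct (Rlt_dec (G x) (G (q+eps))) as [h'|h']; [exact h'|].
      exfalso. assert (q + eps <= q); [|lra]. apply Hub. unfold E; split; [lra|lra].
    - apply Rlt_le_trans with (G y); [exact HG| apply Hmon; lra]. }
  lra.
Qed.

Theorem mainTheorem11
  (mu QT G Qhat : R -> R) (pr : Riemann_integrable Qhat 0 1)
  (Hmu : is_job_cdf mu) (HQT : truthful_map mu QT)
  (HG : early_mass_profile mu G)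
  (Heq : is_equilibrium mu G Qhat (RiemannInt pr)) :
  exists a b c : R,
    0 <= a <= 1 / 2 /\ b = QT a /\ c = QT (1 - a) /\ b <= c /\
    (forall q, G q = mu (Rmax b (Rmin q c)) - mu b).
Proof.
  destruct Hmu as [Hm0 [Hm1 [Hcont _]]].
  destruct HG as [G0 HGd].
  destruct Heq as [_ [E1 E2]].
  set (v := RiemannInt pr) in *.
  unfold early_mass, Qhat_inv, school_avg in *.
  set (m := G 1) in *.
  assert (mu0 : mu 0 = 0) by (apply Hm0; lra).
  assert (mu1 : mu 1 = 1) by (apply Hm1; lra).
  assert (Gmon : forall x y, x <= y -> G x <= G y) by (intros x y h; specialize (HGd x y h); lra).
  assert (mumon : forall x y, x <= y -> mu x <= mu y) by (intros x y h; specialize (HGd x y h); lra).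
  assert (Hm : 0 <= m <= 1) by (specialize (HGd 0 1 ltac:(lra)); unfold m; lra).
  set (a := (1 - m) / 2).
  assert (Ha : 0 <= a <= 1/2) by (unfold a; lra).
  destruct (HQT a ltac:(lra)) as [Hb1 Hb2].
  destruct (HQT (1 - a) ltac:(lra)) as [Hc1 Hc2].
  set (b := QT a) in *. set (c := QT (1 - a)) in *.
  assert (Gnn : forall q, 0 <= G q).
  { intro q. destruct (Rle_dec 0 q) as [h|h].
    - specialize (Gmon 0 q h); lra.
    - specialize (HGd q 0 ltac:(lra)). rewrite (Hm0 q ltac:(lra)) in HGd. lra. }
  assert (Gb : G b = 0).
  { destruct (Req_dec m 1) as [hm|hm].
    - specialize (HGd 0 b ltac:(lra)). assert (a = 0) by (unfold a; lra).
      specialize (Gnn b). lra.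
    - destruct (Req_dec (G b) 0) as [h|h]; [exact h|]. exfalso.
      assert (Gbp : 0 < G b) by (specialize (Gnn b); lra).
      destruct (Hcont b (G b) Gbp) as [d [Hd Hd2]].
      set (x := b - d / 2).
      assert (Hx : Rabs (mu x - mu b) < G b).
      { apply (Hd2 x). split. unfold D_x, no_cond; split; [exact I| unfold x; lra].
        simpl; unfold R_dist, x. rewrite Rabs_left; lra. }
      assert (xb : x <= b) by (unfold x; lra).
      assert (xbs : x < b) by (unfold x; lra).
      specialize (HGd x b xb).
      assert (mu b - mu x < G b) by (rewrite Rabs_left1 in Hx; [lra|specialize (mumon x b xb); lra]).
      assert (Gxp : 0 < G x) by lra.
      assert (x0 : 0 <= x) by (destruct (Rle_dec 0 x) as [h'|h']; [exact h'|specialize (Gmon x 0 ltac:(lra)); lra]).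
      destruct (support_lemma G Gmon 0 x x0 ltac:(lra)) as [q [Hq Hce]].
      destruct (E1 q Hce) as [_ Hvq].
      assert (mlt : m < 1) by (destruct Hm as [_ [hh|hh]]; [exact hh|contradiction]).
      apply (E2 mlt b ltac:(lra)). split; [|lra].
      assert (1 - m > 0) by lra.
      apply (Rmult_lt_reg_r (1 - m)); [lra|]. unfold Rdiv. rewrite Rmult_assoc, Rinv_l; [|lra].
      rewrite Hb2. unfold a. lra. }
  assert (Gc : G c = m).
  { destruct (Req_dec m 1) as [hm|hm].
    - specialize (HGd c 1 ltac:(lra)). assert (a = 0) by (unfold a; lra).
      assert (mu c = 1) by (rewrite Hc2; lra).
      specialize (Gmon c 1 ltac:(lra)). fold m in Gmon; fold m in HGd. lra.
    - pose proof (Gmon c 1 ltac:(lra)) as Gc1. fold m in Gc1.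
      destruct (Req_dec (G c) m) as [h|h]; [exact h|]. exfalso.
      assert (gp : 0 < m - G c) by lra.
      destruct (Hcont c (m - G c) gp) as [d [Hd Hd2]].
      set (x := c + d / 2).
      assert (Hx : Rabs (mu x - mu c) < m - G c).
      { apply (Hd2 x). split. unfold D_x, no_cond; split; [exact I| unfold x; lra].
        simpl; unfold R_dist, x. rewrite Rabs_right; lra. }
      assert (cx : c <= x) by (unfold x; lra).
      assert (cxs : c < x) by (unfold x; lra).
      pose proof (HGd c x cx) as Hcx.
      assert (mu x - mu c < m - G c) by (rewrite Rabs_right in Hx; [lra|specialize (mumon c x cx); lra]).
      assert (Gxl : G x < m) by lra.
      assert (x1 : x <= 1) by (destruct (Rle_dec x 1) as [h'|h']; [exact h'|specialize (Gmon 1 x ltac:(lra)); fold m in Gmon; lra]).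
      destruct (support_lemma G Gmon x 1 x1 Gxl) as [q [Hq Hce]].
      destruct (E1 q Hce) as [Hle _].
      assert (mlt : m < 1) by (destruct Hm as [_ [hh|hh]]; [exact hh|contradiction]).
      pose proof (HGd c q ltac:(lra)) as Hcq.
      assert (Fq : mu q - G q > (1 - m) / 2) by (rewrite Hc2 in Hcq; unfold a in Hcq; lra).
      assert (HH : (mu q - G q) / (1 - m) > 1 / 2); [|exact (Rle_not_lt _ _ Hle HH)].
      apply (Rmult_lt_reg_r (1 - m)); [lra|]. replace ((mu q - G q) / (1 - m) * (1 - m)) with (mu q - G q) by (field; lra).
      lra. }
  assert (bc : b <= c).
  { destruct (Rle_dec b c) as [h|h]; [exact h|]. exfalso.
    specialize (HGd c b ltac:(lra)).
    assert (m = 0) by (rewrite Hb2, Hc2 in HGd; unfold a in HGd; lra).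
    assert (Haa : 1 - a = a) by (unfold a; lra).
    unfold c in h. rewrite Haa in h. fold b in h. lra. }
  exists a, b, c. split; [exact Ha|]. split; [reflexivity|]. split; [reflexivity|]. split; [exact bc|].
  intro q.
  destruct (Rle_dec q b) as [h1|h1].
  - rewrite Rmin_left by lra. rewrite Rmax_left by lra.
    specialize (Gmon q b h1). specialize (Gnn q). lra.
  - destruct (Rle_dec q c) as [h2|h2].
    + rewrite Rmin_left by lra. rewrite Rmax_right by lra.
      pose proof (HGd b q ltac:(lra)). pose proof (HGd q c h2).
      rewrite Hb2, Hc2 in *. unfold a in *. lra.
    + rewrite Rmin_right by lra. rewrite Rmax_right by lra.
      rewrite Hb2, Hc2. unfold a.
      pose proof (Gmon c q ltac:(lra)) as Gcq.
      destruct (Rle_dec q 1) as [h3|h3].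
      * pose proof (Gmon q 1 h3) as Gq1. fold m in Gq1. lra.
      * specialize (HGd 1 q ltac:(lra)). rewrite (Hm1 q ltac:(lra)), mu1 in HGd. fold m in HGd. lra.
Qed.
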